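(* Let $h$ be odd and let $\psi$ be an additive character of $\mathbb{F}_{q^2}$ of conductor $q^2$. If $\nu$ is a character of $H'$ whose restriction to $H_0'$ is $\widetilde\psi$, then $\nu=\chi^\sharp$ for some $\chi\in\mathcal A_\psi$. Moreover, $$\mathrm{Ind}_{H_0'}^{H'}(\widetilde\psi)\cong\bigoplus_{\chi\in\mathcal A_\psi}\chi^\sharp.$$
   Context: Let $p$ be a prime, $q$ a power of $p$, $\ell\ne p$, and $h\ge3$ an odd integer. For a commutative $\mathbb{F}_q$-algebra $A$, $U_h^{2,q}(A)$ is the set of formal expressions $1+\sum_{i=1}^{2(h-1)}a_i\tau^i$ ($a_i\in A$) with multiplication obtained by extending $(a\tau^i)(b\tau^j)=ab^{q^i}\tau^{i+j}$ bi-additively, $\tau^0=1$, $\tau^k=0$ for $k>2(h-1)$. In $\mathcal U=U_h^{2,q}(\mathbb{F}_{q^2})$ let $H_0'=\{1+\sum a_i\tau^i: a_i=0\text{ unless } i=2(h-1)\text{ or } i\text{ is odd with } i>h-1\}$ and $H'=\{1+\sum a_i\tau^i: a_i=0\text{ for all odd } i\le h-1\}$. Let $L=\mathbb{F}_{q^2}((\pi))$ and $U_L^i=1+\pi^i\mathbb{F}_{q^2}[[\pi]]$. An additive character $\psi\colon\mathbb{F}_{q^2}\to\overline{\mathbb{Q}}_\ell^\times$ has conductor $q^2$ if there exists $x$ with $\psi(x^q)\ne\psi(x)$; $\widetilde\psi(1+\sum a_i\tau^i)=\psi(a_{2(h-1)})$ on $H_0'$. $\mathcal A_\psi$ is the set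 of characters $\chi$ of $U_L^1/U_L^h$ with $\chi(1+a\pi^{h-1})=\psi(a)$ for all $a\in\mathbb{F}_{q^2}$. For $\chi\in\mathcal A_\psi$, $\chi^\sharp$ is the character of $H'$ given by $\chi^\sharp(1+\sum a_i\tau^i)=\chi(1+a_2\pi+a_4\pi^2+\cdots+a_{2(h-1)}\pi^{h-1})$. *)

(* Defs.v *)
From HB Require Import structures.
From mathcomp Require Import all_boot all_order all_algebra all_fingroup all_solvable all_field all_character.
Set Implicit Arguments. Unset Strict Implicit. Unset Printing Implicit Defensive.
Import Order.TTheory GRing.Theory Num.Theory.
Local Open Scope ring_scope.

(* N = 2(h-1): top exponent of tau in U_h^{2,q}. *)
Definition Nh (h : nat) : nat := (h.-1).*2.

Section Defs.
Variables (F : finFieldType) (q h : nat).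

(* Matrix model of U_h^{2,q}(F): the element 1 + sum_i a_i tau^i (a_0 = 1)
   is represented by the (N+1)x(N+1) matrix M with M i j = a_(j-i)^(q^i)
   for i <= j and 0 otherwise.  Row 0 of M is (1, a_1, ..., a_N), and
   M(x) M(y) = M(xy) for the twisted multiplication
   (a tau^i)(b tau^j) = a b^(q^i) tau^(i+j). *)
Definition isU (M : 'M[F]_((Nh h).+1)) : bool :=
  (M ord0 ord0 == 1) &&
  [forall i : 'I_((Nh h).+1), forall j : 'I_((Nh h).+1),
     M i j == (if (i <= j)%N then (M ord0 (inord (j - i))) ^+ (q ^ i) else 0)].

Definition Uset : {set {'GL_((Nh h).+1)[F]}} := [set g : {'GL_((Nh h).+1)[F]} | isU (GLval g)].

Definition Hpset : {set {'GL_((Nh h).+1)[F]}} :=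
  [set g in Uset | [forall j : 'I_((Nh h).+1),
     (odd j && (j <= h.-1)%N) ==> (GLval g ord0 j == 0)]].

Definition H0set : {set {'GL_((Nh h).+1)[F]}} :=
  [set g in Uset | [forall j : 'I_((Nh h).+1),
     [&& (0 < j)%N, (j != Nh h :> nat) & ~~ (odd j && (h.-1 < j)%N)]
       ==> (GLval g ord0 j == 0)]].

Definition Hp := <<Hpset>>%G.
Definition H0 := <<H0set>>%G.

(* Matrix model of U_L^1/U_L^h: 1 + b_1 pi + ... + b_(h-1) pi^(h-1)
   is the h x h upper unitriangular Toeplitz matrix with row 0
   equal to (1, b_1, ..., b_(h-1)). *)
Definition isT (M : 'M[F]_h.-1.+1) : bool :=
  (M ord0 ord0 == 1) &&
  [forall i : 'I_h.-1.+1, forall j : 'I_h.-1.+1,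
     M i j == (if (i <= j)%N then M ord0 (inord (j - i)) else 0)].

Definition Wset : {set {'GL_h[F]}} := [set w : {'GL_h[F]} | isT (GLval w)].
Definition W := <<Wset>>%G.

(* A_psi : (linear) characters chi of U_L^1/U_L^h with chi(1 + a pi^(h-1)) = psi a *)
Definition Apsi (psi : F -> algC) : {set Iirr W} :=
  [set i | ('chi[W]_i \is a linear_char) &&
     [forall w in Wset,
        [forall j : 'I_h.-1.+1, ((0 < j)%N && (j < h.-1)%N) ==> (GLval w ord0 j == 0)]
        ==> ('chi[W]_i w == psi (GLval w ord0 ord_max))]].

(* chi^sharp (1 + sum a_i tau^i) = chi(1 + a_2 pi + a_4 pi^2 + ... + a_(2(h-1)) pi^(h-1)) *)
Definition sharp (chi : 'CF(W)) (g : {'GL_((Nh h).+1)[F]}) : algC :=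
  if [pick w in Wset | [forall j : 'I_h.-1.+1,
        GLval w ord0 j == GLval g ord0 (inord (j.*2))]] is Some w
  then chi w else 0.

End Defs.

Arguments Uset : clear implicits.
Arguments Hpset : clear implicits.
Arguments H0set : clear implicits.
Arguments Hp : clear implicits.
Arguments H0 : clear implicits.
Arguments Wset : clear implicits.
Arguments W : clear implicits.
Arguments Apsi : clear implicits.
Arguments sharp : clear implicits.

(* Main.v *)
Require Import Defs.
From HB Require Import structures.
From mathcomp Require Import all_boot all_order all_algebra all_fingroup all_solvable all_field all_character.
Import Order.TTheory GRing.Theory Num.Theory.
Local Open Scope ring_scope.
From mathcomp Require Import zify ring.
Set Implicit Arguments. Unset Strict Implicit. Unset Printing Implicit Defensive.

Section Gen.
Variable F : fieldType.
Variable n : nat.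
Variable phi : nat -> F -> F.
Hypotheses (phiD : forall i x y, phi i (x + y) = phi i x + phi i y)
  (phi0 : forall i, phi i 0 = 0) (phiM : forall i x y, phi i (x * y) = phi i x * phi i y)
  (phiC : forall i k x, phi i (phi k x) = phi (k + i) x).

Definition Tmx (a : nat -> F) : 'M[F]_n.+1 :=
  \matrix_(i, j) if (i <= j)%N then phi i (a (j - i)%N) else 0.

Lemma Tmx_ext a b : (forall d, (d <= n)%N -> a d = b d) -> Tmx a = Tmx b.
Proof.
move=> ab; apply/matrixP => i j; rewrite !mxE; case: leqP => // ij.
by rewrite ab // (leq_trans (leq_subr _ _)) // -ltnS.
Qed.

Lemma phi_sum I r P (G : I -> F) i :
  phi i (\sum_(k <- r | P k) G k) = \sum_(k <- r | P k) phi i (G k).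
Proof. exact: (big_morph _ (phiD i) (phi0 i)). Qed.

Definition conv (a b : nat -> F) d := \sum_(k < d.+1) a k * phi k (b (d - k)%N).

Lemma mulTmx a b : Tmx a *m Tmx b = Tmx (conv a b).
Proof.
apply/matrixP => i j; rewrite !mxE.
under eq_bigr do rewrite !mxE.
case: (leqP i j) => ij; last first.
  apply: big1 => k _; case: (leqP i k) => ik; last by rewrite mul0r.
  by rewrite leqNgt (leq_trans ij ik) mulr0.
rewrite -(big_mkord xpredT (fun k : nat => (if (i <= k)%N then phi i (a (k - i)%N) else 0) *
   (if (k <= j)%N then phi k (b (j - k)%N) else 0))).
rewrite (@big_cat_nat _ _ _ i) //=; last by apply: ltnW.
rewrite big1_seq ?add0r; last first.
  by move=> k /andP[_]; rewrite mem_index_iota => /andP[_ ki]; rewrite leqNgt ki mul0r.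
rewrite (@big_cat_nat _ _ _ j.+1) //=.
rewrite [X in _ + X]big1_seq ?addr0; last first.
  by move=> k /andP[_]; rewrite mem_index_iota => /andP[jk _]; rewrite (leqNgt k j) jk mulr0.
rewrite /conv phi_sum -(big_mkord xpredT (fun k => phi i (a k * phi k (b (j - i - k)%N)))).
rewrite -{1}[i : nat]add0n big_addn subSn //.
rewrite big_nat_cond [RHS]big_nat_cond; apply: eq_bigr => k /andP[/andP[_ kl] _].
rewrite leq_addl addnK.
have -> : (k + i <= j)%N by lia.
rewrite phiM phiC -subnDA (addnC i k) //.
by apply: ltnW.
Qed.

Lemma Tmx_unit a : (forall i, phi i (a 0%N) = 1) -> Tmx a \in unitmx.
Proof.
move=> a0; rewrite unitmxE -det_tr det_trig.
  by rewrite big1 ?unitr1 // => i _; rewrite !mxE leqnn subnn.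
apply/forallP => i; apply/forallP => j; apply/implyP => ij.
by rewrite !mxE leqNgt ij.
Qed.
End Gen.


Lemma lin_of_hom (gT : finGroupType) (G : {group gT}) (mu : gT -> algC) :
  mu 1%g = 1 -> {in G &, {morph mu : x y / (x * y)%g >-> x * y}} ->
  exists2 xi : 'CF(G), xi \is a linear_char & {in G, forall x, xi x = mu x}.
Proof.
move=> mu1 muM; pose r x : 'M[algC]_1 := (mu x)%:M.
have rR : mx_repr G r.
  by split=> [|x y Gx Gy]; rewrite /r ?mu1 // muM // scalar_mxM.
exists (cfRepr (MxRepresentation rR)).
  by rewrite qualifE/= cfRepr_char cfunE group1 /= /r mu1 mxtrace1 mulr1n /=.
by move=> x Gx; rewrite cfunE Gx /= /r mxtrace_scalar mulr1n.
Qed.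

Section Main.
Variables (F : finFieldType) (q h : nat).
Hypotheses (q0 : (0 < q)%N)
  (frD : forall i (x y : F), (x + y) ^+ (q ^ i) = x ^+ (q ^ i) + y ^+ (q ^ i))
  (fr2 : forall x : F, x ^+ (q ^ 2) = x) (h3 : (3 <= h)%N).

Definition fr (i : nat) (x : F) := x ^+ (q ^ i).
Lemma frD1 i x y : fr i (x + y) = fr i x + fr i y. Proof. exact: frD. Qed.
Lemma fr0 i : fr i 0 = 0. Proof. by rewrite /fr expr0n expn_eq0 eqn0Ngt q0. Qed.
Lemma frM i x y : fr i (x * y) = fr i x * fr i y. Proof. exact: exprMn. Qed.
Lemma frC i k x : fr i (fr k x) = fr (k + i) x.
Proof. by rewrite /fr -exprM expnD. Qed.
Lemma fr1 i : fr i 1 = 1. Proof. exact: expr1n. Qed.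
Lemma fr_0 x : fr 0 x = x. Proof. by rewrite /fr expn0 expr1. Qed.
Lemma fr_even m x : fr (m.*2) x = x.
Proof.
elim: m => [|m IH]; first exact: fr_0.
by rewrite doubleS -addn2 -frC IH; apply: fr2.
Qed.

Local Notation N := (Nh h).
Local Notation GLN := {'GL_N.+1[F]}.
Local Notation UM := (@Tmx F N fr).

Definition ra (g : GLN) (j : nat) : F := GLval g ord0 (inord j).

Lemma Tmx_ra (g : GLN) a j : GLval g = UM a -> (j <= N)%N -> ra g j = a j.
Proof. by move=> ga jN; rewrite /ra ga mxE inordK // subn0 fr_0. Qed.

Lemma Tmx_U (g : GLN) a : GLval g = UM a -> a 0%N = 1 -> g \in Uset F q h.
Proof.
move=> ga a0; rewrite inE /isU; apply/andP; split.
  by rewrite ga mxE subn0 fr_0 a0.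
apply/forallP => i; apply/forallP => j; rewrite ga !mxE inordK; last first.
  by rewrite ltnS (leq_trans (leq_subr _ _)) // -ltnS.
by rewrite !subn0 fr_0.
Qed.

Lemma U_eq (g : GLN) : g \in Uset F q h -> GLval g = UM (ra g).
Proof.
rewrite inE => /andP[_ /forallP H]; apply/matrixP => i j; rewrite mxE.
by move/forallP: (H i) => /(_ j) /eqP ->.
Qed.

Lemma U_ra0 (g : GLN) : g \in Uset F q h -> ra g 0 = 1.
Proof.
rewrite inE => /andP[/eqP H _]; rewrite /ra -H; congr (GLval g _ _).
by apply/val_inj; rewrite /= inordK.
Qed.

Lemma U_mul (g1 g2 : GLN) : g1 \in Uset F q h -> g2 \in Uset F q h ->
  GLval (g1 * g2)%g = UM (@conv F fr (ra g1) (ra g2)).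
Proof.
move=> U1 U2; rewrite GL_MxE (U_eq U1) (U_eq U2) mulTmx //.
all: first [exact: frD1 | exact: fr0 | exact: frM | exact: frC].
Qed.

Lemma conv0 a b : a 0%N = 1 -> b 0%N = 1 -> @conv F fr a b 0 = 1.
Proof. by move=> a0 b0; rewrite /conv big_ord1 a0 subn0 b0 fr1 mulr1. Qed.

Lemma Uset_mul (g1 g2 : GLN) : g1 \in Uset F q h -> g2 \in Uset F q h -> (g1 * g2)%g \in Uset F q h.
Proof.
move=> U1 U2; apply: (Tmx_U (U_mul U1 U2)).
by apply: conv0; apply: U_ra0.
Qed.

Lemma ra_mul (g1 g2 : GLN) j : g1 \in Uset F q h -> g2 \in Uset F q h -> (j <= N)%N ->
  ra (g1 * g2)%g j = \sum_(k < j.+1) ra g1 k * fr k (ra g2 (j - k)).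
Proof. by move=> U1 U2 jN; rewrite (Tmx_ra (U_mul U1 U2)). Qed.

Definition mkU (a : nat -> F) : GLN := insubd (1%g : GLN) (UM a).

Lemma mkU_val a : a 0%N = 1 -> GLval (mkU a) = UM a.
Proof.
move=> a0; rewrite /mkU insubdK //.
apply: Tmx_unit; last by move=> i; rewrite a0 fr1.
all: first [exact: frD1 | exact: fr0 | exact: frM | exact: frC].
Qed.


Lemma raE (g : GLN) (j : 'I_N.+1) : GLval g ord0 j = ra g j.
Proof. by rewrite /ra inord_val. Qed.

Lemma HpP (g : GLN) : reflect (g \in Uset F q h /\
   forall j, (j <= N)%N -> odd j -> (j <= h.-1)%N -> ra g j = 0) (g \in Hpset F q h).
Proof.
rewrite [g \in Hpset _ _ _]inE; apply: (iffP andP) => [[U /forallP H]|[U H]]; split => //.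
  move=> j jN oj jh; have := H (Ordinal (jN : (j < N.+1)%N)).
  by rewrite /= oj jh raE /= => /eqP.
apply/forallP => j; apply/implyP => /andP[oj jh]; rewrite raE H //; rewrite -ltnS; exact: ltn_ord.
Qed.

Lemma H0P (g : GLN) : reflect (g \in Uset F q h /\
   forall j, (j <= N)%N -> (0 < j)%N -> j != N -> ~~ (odd j && (h.-1 < j)%N) -> ra g j = 0)
   (g \in H0set F q h).
Proof.
rewrite [g \in H0set _ _ _]inE; apply: (iffP andP) => [[U /forallP H]|[U H]]; split => //.
  move=> j jN j0 jN' oj; have := H (Ordinal (jN : (j < N.+1)%N)).
  by rewrite /= j0 jN' oj raE /= => /eqP.
apply/forallP => j; apply/implyP => /and3P[j0 jN' oj]; rewrite raE H //; rewrite -ltnS; exact: ltn_ord.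
Qed.

Lemma U1val : GLval (1%g : GLN) = UM (fun d => (d == 0%N)%:R).
Proof.
apply/matrixP => i j; rewrite !mxE; case: leqP => ij.
  rewrite subn_eq0 -val_eqE /= eqn_leq ij /=.
  by case: (j <= i)%N; rewrite ?fr1 ?fr0.
by rewrite -val_eqE /= (gtn_eqF ij).
Qed.

Lemma U1mem : (1%g : GLN) \in Uset F q h.
Proof. exact: Tmx_U U1val _. Qed.

Lemma ra1 j : (j <= N)%N -> ra 1%g j = (j == 0%N)%:R.
Proof. exact: Tmx_ra U1val. Qed.

Lemma Hpset_group : group_set (Hpset F q h).
Proof.
apply/group_setP; split.
  apply/HpP; split; first exact: U1mem.
  by move=> j jN oj _; rewrite ra1 //; case: eqP oj => // ->.
move=> g1 g2 /HpP[U1 H1] /HpP[U2 H2]; apply/HpP; split; first exact: Uset_mul.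
move=> j jN oj jh; rewrite ra_mul //; apply: big1 => [[k /=]]; rewrite ltnS => kj _.
case ok: (odd k); first by rewrite H1 ?mul0r //; apply: leq_trans kj _.
rewrite H2 ?fr0 ?mulr0 //.
- by apply: leq_trans (leq_subr _ _) jN.
- by rewrite oddB // oj ok.
- by apply: leq_trans (leq_subr _ _) jh.
Qed.

Lemma memHp (g : GLN) : (g \in Hp F q h) = (g \in Hpset F q h).
Proof. by rewrite /Hp /= gen_set_id //; apply: Hpset_group. Qed.


Lemma H0set_group : group_set (H0set F q h).
Proof.
apply/group_setP; split.
  apply/H0P; split; first exact: U1mem.
  by move=> j jN j0 _ _; rewrite ra1 // eqn0Ngt j0.
move=> g1 g2 /H0P[U1 H1] /H0P[U2 H2]; apply/H0P; split; first exact: Uset_mul.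
move=> j jN j0 jN' oj; rewrite ra_mul //; apply: big1 => [[k /=]]; rewrite ltnS => kj _.
have [->|k0] := posnP k; first by rewrite U_ra0 // mul1r fr_0 subn0 H2.
have [kj'|] := ltnP k j; last first.
  move=> jk; have -> : k = j by apply/eqP; rewrite eqn_leq kj jk.
  by rewrite subnn U_ra0 // fr1 mulr1 H1.
move: jN jN'; rewrite /Nh => jN /eqP jN'.
case ok: (odd k && (h.-1 < k)%N); last first.
  rewrite H1 ?mul0r ?ok //; rewrite /Nh; last (apply/eqP); lia.
move/andP: ok => [_ hk].
rewrite H2 ?fr0 ?mulr0 //; rewrite /Nh; try lia.
Qed.

Lemma memH0 (g : GLN) : (g \in H0 F q h) = (g \in H0set F q h).
Proof. by rewrite /H0 /= gen_set_id //; apply: H0set_group. Qed.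

Lemma H0sub : H0set F q h \subset Hpset F q h.
Proof.
apply/subsetP => g /H0P[U H]; apply/HpP; split => // j jN oj jh.
apply: H => //; first by case: j oj jN jh.
  by apply/eqP => jN'; move: jh; rewrite jN' /Nh; lia.
by apply/negP => /andP[_]; rewrite ltnNge jh.
Qed.


Lemma sum_split_even (G : nat -> F) d :
  \sum_(k < (d.*2).+1) G k = \sum_(m < d.+1) G (m.*2) + \sum_(m < d) G (m.*2).+1.
Proof.
elim: d => [|d IH]; first by rewrite !big_ord1 big_ord0 addr0.
rewrite (big_ord_recr (d.*2).+2) (big_ord_recr (d.*2).+1) IH (big_ord_recr d.+1) (big_ord_recr d) /= !doubleS; rewrite [X in _ = _ + X]big_ord_recr /=; ring.
Qed.

Local Notation GLW := {'GL_h[F]}.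
Local Notation TM := (@Tmx F h.-1 (fun _ x => x)).

Definition rw (w : GLW) (j : nat) : F := GLval w ord0 (inord j).

Lemma TM_rw (w : GLW) a j : GLval w = TM a -> (j <= h.-1)%N -> rw w j = a j.
Proof. by move=> ga jN; rewrite /rw ga mxE inordK // subn0. Qed.

Lemma TM_W (w : GLW) a : GLval w = TM a -> a 0%N = 1 -> w \in Wset F h.
Proof.
move=> ga a0; rewrite inE /isT; apply/andP; split.
  by rewrite ga mxE subn0 a0.
apply/forallP => i; apply/forallP => j; rewrite ga !mxE inordK; last first.
  by rewrite ltnS (leq_trans (leq_subr _ _)) // -ltnS.
by rewrite !subn0.
Qed.

Lemma W_eq (w : GLW) : w \in Wset F h -> GLval w = TM (rw w).
Proof.
rewrite inE => /andP[_ /forallP H]; apply/matrixP => i j; rewrite mxE.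
by move/forallP: (H i) => /(_ j) /eqP ->.
Qed.

Lemma W_rw0 (w : GLW) : w \in Wset F h -> rw w 0 = 1.
Proof.
rewrite inE => /andP[/eqP H _]; rewrite /rw -H; congr (GLval w _ _).
by apply/val_inj; rewrite /= inordK.
Qed.

Lemma rwE (w : GLW) (j : 'I_h.-1.+1) : GLval w ord0 j = rw w j.
Proof. by rewrite /rw inord_val. Qed.

Definition mkW (a : nat -> F) : GLW := insubd (1%g : GLW) (TM a).

Lemma mkW_val a : a 0%N = 1 -> GLval (mkW a) = TM a.
Proof.
move=> a0; rewrite /mkW insubdK //.
by apply: Tmx_unit => // i x y; rewrite a0.
Qed.

Definition fm (g : GLN) : GLW := mkW (fun j => ra g j.*2).

Lemma fm_val g : g \in Uset F q h -> GLval (fm g) = TM (fun j => ra g j.*2).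
Proof. by move=> U; rewrite mkW_val //= U_ra0. Qed.

Lemma fm_W g : g \in Uset F q h -> fm g \in Wset F h.
Proof. by move=> U; apply: (TM_W (fm_val U)); rewrite /= U_ra0. Qed.

Lemma fm_rw g j : g \in Uset F q h -> (j <= h.-1)%N -> rw (fm g) j = ra g j.*2.
Proof. by move=> U; apply: TM_rw (fm_val U). Qed.

Lemma fmM g1 g2 : g1 \in Hpset F q h -> g2 \in Hpset F q h -> fm (g1 * g2)%g = (fm g1 * fm g2)%g.
Proof.
move=> /HpP[U1 H1] /HpP[U2 H2]; apply: val_inj; change (GLval (fm (g1 * g2)%g) = GLval (fm g1 * fm g2)%g).
rewrite GL_MxE (fm_val U1) (fm_val U2) (fm_val (Uset_mul U1 U2)) mulTmx //.
apply: Tmx_ext => d dh; rewrite ra_mul //; last by rewrite /Nh; lia.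
rewrite (sum_split_even (fun k => ra g1 k * fr k (ra g2 (d.*2 - k)%N))) [X in _ + X]big1 ?addr0; last first.
  move=> [m /= md] _.
  have [kh|kh] := leqP (m.*2.+1) h.-1.
    by rewrite H1 ?mul0r //= ?odd_double //; rewrite /Nh; lia.
  rewrite H2 ?fr0 ?mulr0 //; rewrite ?oddB ?odd_double /=; rewrite /Nh; lia.
rewrite /conv; apply: eq_bigr => [[m /= md]] _.
by rewrite fr_even -doubleB.
Qed.

Definition sw (w : GLW) : GLN := mkU (fun d => if odd d then 0 else rw w d./2).

Lemma sw_val w : w \in Wset F h ->
  GLval (sw w) = UM (fun d => if odd d then 0 else rw w d./2).
Proof. by move=> W; rewrite mkU_val //= W_rw0. Qed.

Lemma sw_U w : w \in Wset F h -> sw w \in Uset F q h.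
Proof. by move=> W; apply: (Tmx_U (sw_val W)); rewrite /= W_rw0. Qed.

Lemma sw_Hp w : w \in Wset F h -> sw w \in Hpset F q h.
Proof.
move=> W; apply/HpP; split; first exact: sw_U.
by move=> j jN oj _; rewrite (Tmx_ra (sw_val W)) // oj.
Qed.

Lemma fm_sw w : w \in Wset F h -> fm (sw w) = w.
Proof.
move=> W; apply: val_inj; change (GLval (fm (sw w)) = GLval w).
rewrite (fm_val (sw_U W)) (W_eq W); apply: Tmx_ext => d dh.
by rewrite (Tmx_ra (sw_val W)) ?odd_double ?doubleK //; rewrite /Nh; lia.
Qed.

Definition midz (w : GLW) := [forall j : 'I_h.-1.+1,
  ((0 < j)%N && (j < h.-1)%N) ==> (GLval w ord0 j == 0)].

Lemma sw_H0 w : w \in Wset F h -> midz w -> sw w \in H0set F q h.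
Proof.
move=> W /forallP mz; apply/H0P; split; first exact: sw_U.
move=> j jN j0 jN' oj; rewrite (Tmx_ra (sw_val W)) //.
case oj2: (odd j) => //.
have jh : (j./2 < h.-1.+1)%N by move: jN; rewrite /Nh; lia.
move: (mz (Ordinal jh)); rewrite rwE /= => /implyP H; apply/eqP; apply: H.
move: jN jN' j0; rewrite /Nh -(odd_double_half j) oj2 add0n => jN /eqP jN' j0.
apply/andP; split; lia.
Qed.

Lemma fm_midz g : g \in H0set F q h -> midz (fm g).
Proof.
move=> /H0P[U H]; apply/forallP => j; apply/implyP => /andP[j0 jh].
rewrite rwE fm_rw // ?H ?odd_double //; rewrite /Nh; try lia.
Qed.

Lemma fm_max g : g \in Uset F q h -> GLval (fm g) ord0 ord_max = ra g N.
Proof. by move=> U; rewrite rwE fm_rw. Qed.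

Lemma ra_max (g : GLN) : GLval g ord0 ord_max = ra g N.
Proof. by rewrite raE. Qed.

Lemma W1val : GLval (1%g : GLW) = TM (fun d => (d == 0%N)%:R).
Proof.
apply/matrixP => i j; rewrite !mxE; case: leqP => ij.
  by rewrite subn_eq0 -val_eqE /= eqn_leq ij.
by rewrite -val_eqE /= (gtn_eqF ij).
Qed.

Lemma ker_fm g : g \in Hpset F q h -> fm g = 1%g -> g \in H0set F q h /\ ra g N = 0.
Proof.
move=> /HpP[U H] f1.
have E m : (m <= h.-1)%N -> ra g m.*2 = (m == 0%N)%:R.
  move=> mh; rewrite -fm_rw // f1; exact: (TM_rw W1val).
split.
  2: rewrite /Nh E // (_ : (h.-1 == 0%N) = false) //; apply/negbTE; rewrite -lt0n; lia.
apply/H0P; split => // j jN j0 jN' oj.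
case oj2: (odd j); first by apply: H => //; move: oj; rewrite oj2 /= -leqNgt.
move: jN j0 jN'; rewrite -(odd_double_half j) oj2 add0n /Nh => jN j0 jN'.
rewrite E; last by lia.
by rewrite (_ : (j./2 == 0%N) = false) //; apply/negbTE; rewrite -lt0n; lia.
Qed.

Lemma W_mul (w1 w2 : GLW) : w1 \in Wset F h -> w2 \in Wset F h ->
  GLval (w1 * w2)%g = TM (@conv F (fun _ x => x) (rw w1) (rw w2)).
Proof. by move=> W1 W2; rewrite GL_MxE (W_eq W1) (W_eq W2) mulTmx. Qed.


Lemma Wset_mul (w1 w2 : GLW) : w1 \in Wset F h -> w2 \in Wset F h -> (w1 * w2)%g \in Wset F h.
Proof.
move=> W1 W2; apply: (TM_W (W_mul W1 W2)).
by rewrite /conv big_ord1 !W_rw0 // mulr1.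
Qed.


Lemma Wset_comm (w1 w2 : GLW) : w1 \in Wset F h -> w2 \in Wset F h -> (w1 * w2 = w2 * w1)%g.
Proof.
move=> W1 W2; apply: val_inj; change (GLval (w1 * w2)%g = GLval (w2 * w1)%g).
rewrite (W_mul W1 W2) (W_mul W2 W1); apply: Tmx_ext => d _.
rewrite /conv (reindex_inj rev_ord_inj); apply: eq_bigr => [[k /= kd]] _.
by rewrite subSS subKn 1?mulrC // -ltnS.
Qed.



Lemma sharpE (chi : 'CF(W F h)) g : g \in Uset F q h -> sharp F h chi g = chi (fm g).
Proof.
move=> U; rewrite /sharp; case: pickP => [w /andP[Ww /forallP wr] | no].
  congr (chi _); apply: val_inj; change (GLval w = GLval (fm g)).
  rewrite (W_eq Ww) (fm_val U); apply: Tmx_ext => d dh.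
  have := wr (inord d); rewrite inordK ?ltnS // => /eqP E.
  by rewrite /rw /ra E.
move: (no (fm g)); rewrite fm_W // andTb => /negbT/negP[].
apply/forallP => j; rewrite rwE fm_rw //; last by rewrite -ltnS.
Qed.


Lemma fM : {in Hp F q h &, {morph fm : x y / (x * y)%g >-> (x * y)%g}}.
Proof. by move=> x y; rewrite !memHp => Hx Hy; apply: fmM. Qed.

Definition fmor : {morphism Hp F q h >-> GLW} := Morphism fM.

Lemma fmorE g : fmor g = fm g. Proof. by []. Qed.

Lemma Hp_U g : g \in Hp F q h -> g \in Uset F q h.
Proof. by rewrite memHp => /HpP[]. Qed.

Lemma sH0 : H0 F q h \subset Hp F q h. Proof. exact: genS H0sub. Qed.

Lemma W_im : W F h = (fmor @* Hp F q h)%g :> {set GLW}.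
Proof.
apply/eqP; rewrite eqEsubset; apply/andP; split.
  rewrite gen_subG; apply/subsetP => w Ww; rewrite -(fm_sw Ww) -fmorE.
  by apply: mem_morphim; rewrite memHp sw_Hp.
apply/subsetP => _ /morphimP[g gD gH ->]; apply: mem_gen; apply: fm_W; exact: Hp_U.
Qed.

Lemma memW w : (w \in W F h) = (w \in Wset F h).
Proof.
apply/idP/idP => [|Ww]; last exact: mem_gen.
by rewrite W_im => /morphimP[g gD _ ->]; apply: fm_W; apply: Hp_U.
Qed.

Lemma W_abelian : abelian (W F h).
Proof.
rewrite /W /= abelian_gen; apply/centsP => x xW y yW.
exact: Wset_comm.
Qed.

Lemma memZ w : (w \in (fmor @* H0 F q h)%g) = (w \in Wset F h) && midz w.
Proof.
apply/idP/idP => [/morphimP[g gD gH ->]|/andP[Ww mz]].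
  rewrite memH0 in gH; rewrite fmorE fm_W ?fm_midz //; exact: Hp_U.
rewrite -(fm_sw Ww) -fmorE; apply: mem_morphim; first by rewrite memHp sw_Hp.
by rewrite memH0 sw_H0.
Qed.

Lemma Z_mul w1 w2 : w1 \in Wset F h -> w2 \in Wset F h -> midz w1 -> midz w2 ->
  GLval (w1 * w2)%g ord0 ord_max = GLval w1 ord0 ord_max + GLval w2 ord0 ord_max.
Proof.
move=> W1 W2 m1 m2; rewrite !rwE (TM_rw (W_mul W1 W2)) // /conv (bigD1 ord0) //.
rewrite (bigD1 ord_max) /=; last by rewrite -val_eqE /= -lt0n; lia.
rewrite big1 ?addr0 => [|i /andP[i0 im]].
  by rewrite subn0 subnn !W_rw0 // mul1r mulr1 addrC.
move/forallP: m1 => /(_ i) /implyP; rewrite rwE => H; rewrite (eqP (H _)) ?mul0r //.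
rewrite -val_eqE /= in i0; rewrite -val_eqE /= in im.
rewrite lt0n i0 /= ltn_neqAle im /= -ltnS; exact: ltn_ord.
Qed.


Lemma ker_H0 : ('ker fmor)%g \subset H0 F q h.
Proof.
apply/subsetP => x xK; have xD := dom_ker xK; have := mker xK; rewrite fmorE => f1.
by rewrite memH0; case: (ker_fm _ f1) => //; rewrite -memHp.
Qed.

Lemma W_imG : (fmor @* Hp F q h)%G = W F h.
Proof. by apply: val_inj; rewrite /= -W_im. Qed.

Lemma sZW : (fmor @* H0 F q h)%g \subset W F h.
Proof. by rewrite W_im; apply: morphimS; apply: sH0. Qed.

Lemma ra1N : ra 1%g N = 0.
Proof. by rewrite ra1 // (_ : (N == 0)%N = false) //; apply/negbTE; rewrite /Nh -lt0n; lia. Qed.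

Lemma W1max : GLval (1%g : GLW) ord0 ord_max = 0.
Proof.
rewrite rwE (TM_rw W1val) //= (_ : (h.-1 == 0)%N = false) //.
by apply/negbTE; rewrite -lt0n; lia.
Qed.

Section Chars.
Variable psi : F -> algC.
Hypotheses (psiD : forall x y, psi (x + y) = psi x * psi y) (psi0 : psi 0 = 1).

Lemma lamP : exists2 lam : 'CF((fmor @* H0 F q h)%G), lam \is a linear_char &
   {in (fmor @* H0 F q h)%G, forall w, lam w = psi (GLval w ord0 ord_max)}.
Proof.
apply: lin_of_hom; first by rewrite W1max psi0.
by move=> w1 w2; rewrite !memZ => /andP[W1 m1] /andP[W2 m2]; rewrite Z_mul // psiD.
Qed.

Lemma part2 (phi : 'CF(H0 F q h)) :
  (forall g, g \in H0 F q h -> phi g = psi (GLval g ord0 ord_max)) ->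
  forall g, g \in Hp F q h ->
    ('Ind[Hp F q h] phi) g = \sum_(i in Apsi F h psi) sharp F h 'chi[W F h]_i g.
Proof.
move=> Hphi g gHp.
have [lam lamL lamE] := lamP.
have phiE : phi = cfMorph lam.
  apply/cfun_inP => x xH0; have xHp := subsetP sH0 x xH0.
  rewrite cfMorphE ?sH0 // lamE ?mem_morphim // Hphi // fmorE fm_max ?ra_max //.
  exact: Hp_U.
rewrite phiE cfIndMorph ?ker_H0 ?sH0 // cfMorphE // -W_im.
rewrite {1}(cfun_sum_cfdot ('Ind[W F h] lam)) sum_cfunE.
rewrite [RHS](eq_bigr (fun i => 'chi_i (fmor g))) => [|i _]; last first.
  by rewrite sharpE ?fmorE //; apply: Hp_U.
rewrite [RHS]big_mkcond; apply: eq_bigr => i _; rewrite cfunE -Frobenius_reciprocity.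
suff -> : '[lam, 'Res[(fmor @* H0 F q h)%G] 'chi[W F h]_i] = (i \in Apsi F h psi)%:R.
  by case: (i \in Apsi F h psi); rewrite ?mul1r ?mul0r.
move/char_abelianP: W_abelian => /(_ i) chiL.
have resL := cfRes_lin_char (fmor @* H0 F q h)%G chiL.
have /irrP[a Ea] := lin_char_irr lamL.
have /irrP[b Eb] := lin_char_irr resL.
rewrite Ea Eb cfdot_irr; congr ((nat_of_bool _)%:R).
rewrite -(inj_eq irr_inj) -Ea -Eb.
apply/idP/idP => [/eqP E | A].
  rewrite inE chiL /=; apply/forallP => w; apply/implyP => Ww; apply/implyP => mz.
  have wZ : w \in (fmor @* H0 F q h)%G by rewrite memZ Ww.
  by rewrite -(cfResE _ sZW wZ) -E lamE.
apply/eqP/cfun_inP => w wZ; rewrite lamE // cfResE ?sZW //.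
move: A; rewrite inE => /andP[_ /forallP/(_ w)].
move: wZ; rewrite memZ => /andP[Ww mz].
by move=> /implyP/(_ Ww)/implyP/(_ mz)/eqP ->.
Qed.


Lemma part1 (phi : 'CF(H0 F q h)) :
  (forall g, g \in H0 F q h -> phi g = psi (GLval g ord0 ord_max)) ->
  forall nu : 'CF(Hp F q h), nu \is a character -> 'Res[H0 F q h] nu = phi ->
  exists2 i, i \in Apsi F h psi &
    forall g, g \in Hp F q h -> nu g = sharp F h 'chi[W F h]_i g.
Proof.
move=> Hphi nu Nc Rn.
have nuH0 x : x \in H0 F q h -> nu x = psi (ra x N).
  by move=> xH0; rewrite -(cfResE nu sH0 xH0) Rn Hphi // ra_max.
have nu1 : nu 1%g = 1 by rewrite nuH0 ?group1 // ra1N psi0.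
have nuL : nu \is a linear_char by rewrite qualifE/= Nc nu1 eqxx.
have fib g1 g2 : g1 \in Hp F q h -> g2 \in Hp F q h -> fm g1 = fm g2 -> nu g1 = nu g2.
  move=> H1 H2 E; pose k := (g1^-1 * g2)%g.
  have kH : k \in Hp F q h by rewrite groupM ?groupV.
  have fk : fm k = 1%g.
    by rewrite -fmorE morphM ?groupV // morphV // !fmorE E mulVg.
  have kH' : k \in Hpset F q h by rewrite -memHp.
  have [kH0 kN] := ker_fm kH' fk.
  have -> : g2 = (g1 * k)%g by rewrite /k mulKVg.
  by rewrite lin_charM // (nuH0 k) ?memH0 // kN psi0 mulr1.
have sWH w : w \in W F h -> sw w \in Hp F q h.
  by rewrite memW memHp; apply: sw_Hp.
have [xi xiL xiE] : exists2 xi : 'CF(W F h), xi \is a linear_char &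
    {in W F h, forall w, xi w = nu (sw w)}.
  apply: lin_of_hom.
    rewrite -nu1; apply: fib; [apply: sWH; exact: group1 | exact: group1 | ].
    by rewrite fm_sw -?memW ?group1 // -fmorE morph1.
  move=> w1 w2 W1 W2; rewrite -lin_charM ?sWH //; apply: fib; rewrite ?groupM ?sWH ?groupM //.
  rewrite fm_sw -?memW ?groupM // -fmorE morphM ?sWH // !fmorE !fm_sw -?memW //.
have /irrP[i Ei] := lin_char_irr xiL.
exists i.
  rewrite inE -Ei xiL /=; apply/forallP => w; apply/implyP => Ww; apply/implyP => mz.
  rewrite xiE ?memW // nuH0; last by rewrite memH0 sw_H0.
  by rewrite (Tmx_ra (sw_val Ww)) // rwE /Nh odd_double doubleK.
move=> g gH; rewrite sharpE ?Hp_U // -Ei xiE; last by rewrite memW fm_W ?Hp_U.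
apply: fib => //; first by apply: sWH; rewrite memW fm_W ?Hp_U.
by rewrite fm_sw // fm_W ?Hp_U.
Qed.

End Chars.
End Main.

Unset Implicit Arguments.

Theorem lemma2p6 (p k h : nat) (F : finFieldType) (psi : F -> algC) :
  prime p -> (0 < k)%N -> #|F| = ((p ^ k) ^ 2)%N ->
  odd h -> (3 <= h)%N ->
  (forall x y : F, psi (x + y) = psi x * psi y) -> psi 0 = 1 ->
  (exists x : F, psi (x ^+ (p ^ k)) != psi x) ->
  forall phi : 'CF(H0 F (p ^ k) h),
    (forall g, g \in H0 F (p ^ k) h -> phi g = psi (GLval g ord0 ord_max)) ->
    (forall nu : 'CF(Hp F (p ^ k) h), nu \is a character ->
       'Res[H0 F (p ^ k) h] nu = phi ->
       exists2 i, i \in Apsi F h psi &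
         forall g, g \in Hp F (p ^ k) h -> nu g = sharp F h 'chi[W F h]_i g)
    /\
    (forall g, g \in Hp F (p ^ k) h ->
       ('Ind[Hp F (p ^ k) h] phi) g = \sum_(i in Apsi F h psi) sharp F h 'chi[W F h]_i g).
Proof.
move=> pr k0 cF _ h3 psiD psi0 _ phi Hphi.
have q0 : (0 < p ^ k)%N by rewrite expn_gt0 prime_gt0.
have chF : p \in [pchar F] by apply: card_finPcharP pr; rewrite cF -expnM.
have frD i (x y : F) : (x + y) ^+ ((p ^ k) ^ i) = x ^+ ((p ^ k) ^ i) + y ^+ ((p ^ k) ^ i).
  apply: exprDn_pchar; rewrite (eq_pnat _ (pcharf_eq chF)) !pnatX pnat_id //.
have fr2 (x : F) : x ^+ ((p ^ k) ^ 2) = x by rewrite -cF expf_card.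
split.
  exact: (part1 q0 frD fr2 h3 psi0 Hphi).
exact: (part2 q0 frD fr2 h3 psiD psi0 Hphi).
Qed.
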